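(* Let $m\geq n\geq 6$ and $S\subseteq V(K_m\Box K_n)$. If every row and every column of $K_m\Box K_n$ contains at least two elements of $S$ and every quadruple contains at least one element of $S$, then $S$ is a $\{2\}$-resolving set of $K_m\Box K_n$.
   Context: $K_m\Box K_n$ has vertices $av$ with $a\in V(K_m)$, $v\in V(K_n)$; distinct $av,bu$ are adjacent iff $a=b$ or $u=v$. A column is a set $\{au: u\in V(K_n)\}$ for fixed $a$; a row is a set $\{au: a\in V(K_m)\}$ for fixed $u$. A quadruple is a set $\{av,au,bv,bu\}$ with $a\neq b$, $u\neq v$. $d$ is the shortest-path distance, $d(s,X)=\min_{x\in X}d(s,x)$, $\mathcal{D}_S(X)=(d(s_1,X),\dots,d(s_k,X))$ for $S=\{s_1,\dots,s_k\}$. $S$ is a $\{2\}$-resolving set if $\mathcal{D}_S(X)\neq\mathcal{D}_S(Y)$ for all distinct nonempty vertex sets $X,Y$ with $|X|,|Y|\leq 2$. *)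

(* Defs.v *)
From mathcomp Require Import all_boot.
Set Implicit Arguments. Unset Strict Implicit. Unset Printing Implicit Defensive.

(* Vertices of K_m \Box K_n: pairs (a, v) with a : 'I_m (column index),
   v : 'I_n (row index). *)
Notation vtx m n := (prod (ordinal m) (ordinal n)).

Definition adj (m n : nat) (x y : vtx m n) : bool :=
  (x != y) && ((x.1 == y.1) || (x.2 == y.2)).

Fixpoint reach (m n : nat) (k : nat) (x : vtx m n) : {set vtx m n} :=
  if k is k'.+1 then
    reach k' x :|: [set y | [exists z in reach k' x, adj z y]]
  else [set x].

(* Shortest-path distance: the least k such that y is reachable within k steps
   (searched among 0 .. #|V|; the graph is connected, so it is always found). *)
Definition dist (m n : nat) (x y : vtx m n) : nat :=
  find (fun k => y \in reach k x) (iota 0 #|[set: vtx m n]|.+1).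

(* d(s, X) = min_{x in X} d(s, x)  (only used for nonempty X). *)
Definition dist_set (m n : nat) (s : vtx m n) (X : {set vtx m n}) : nat :=
  \big[minn/#|[set: vtx m n]|.+1]_(x in X) dist s x.

Definition column (m n : nat) (a : 'I_m) : {set vtx m n} := [set x | x.1 == a].
Definition row (m n : nat) (u : 'I_n) : {set vtx m n} := [set x | x.2 == u].

Definition quadruple (m n : nat) (a b : 'I_m) (u v : 'I_n) : {set vtx m n} :=
  [set (a, v); (a, u); (b, v); (b, u)].

(* S is a {2}-resolving set: the distance vectors D_S(X) differ for all distinct
   nonempty X, Y with |X|, |Y| <= 2.  D_S(X) is represented as the function
   s |-> d(s, X) on S. *)
Definition two_resolving (m n : nat) (S : {set vtx m n}) : Prop :=
  forall X Y : {set vtx m n},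
    X != set0 -> Y != set0 -> #|X| <= 2 -> #|Y| <= 2 -> X != Y ->
    exists2 s, s \in S & dist_set s X != dist_set s Y.

(* Main.v *)
From HB Require Import structures.
Require Import Defs.
From mathcomp Require Import all_boot zify.

Set Implicit Arguments. Unset Strict Implicit. Unset Printing Implicit Defensive.

HB.instance Definition _ := SemiGroup.isComLaw.Build nat minn minnA minnC.

Definition dv (m n : nat) (x y : vtx m n) : nat :=
  if x == y then 0 else if (x.1 == y.1) || (x.2 == y.2) then 1 else 2.

Lemma reach0 m n (x y : vtx m n) : (y \in reach 0 x) = (y == x).
Proof. by rewrite /= inE. Qed.

Lemma reach1 m n (x y : vtx m n) : (y \in reach 1 x) = (y == x) || adj x y.
Proof.
rewrite /= !inE; congr (_ || _).
apply/idP/idP => [/exists_inP [z]|h]; first by rewrite inE => /eqP ->.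
by apply/exists_inP; exists x; rewrite ?inE ?eqxx.
Qed.

Lemma reach2 m n (x y : vtx m n) : y \in reach 2 x.
Proof.
have -> : reach 2 x = reach 1 x :|: [set y | [exists z in reach 1 x, adj z y]] by [].
rewrite in_setU in_set; case h1: (y \in reach 1 x) => //; rewrite orFb.
move: h1; rewrite reach1 /adj.
case: x => a u; case: y => b v => h1.
apply/exists_inP; exists (a, v).
  rewrite reach1 /adj /= !xpair_eqE eqxx /=.
  by rewrite andbT eq_sym orbN.
rewrite /= eqxx orbT andbT.
apply/eqP => -[e]; subst b; move: h1; rewrite /= eqxx /=.
by rewrite andbT eq_sym orbN.
Qed.

Lemma dist_dv m n (x y : vtx m n) : 3 <= #|[set: vtx m n]| -> dist x y = dv x y.
Proof.
move=> h3; rewrite /dist.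
have -> : #|[set: vtx m n]|.+1 = (#|[set: vtx m n]| - 3).+4.
  by rewrite -[in LHS](subnK h3) addnS addnS addnS addn0.
rewrite /= -/(reach 0 x) -/(reach 1 x) -/(reach 2 x).
rewrite reach0 reach1 reach2 /dv /adj.
case: (y =P x) => [->|/eqP nyx]; first by rewrite eqxx.
rewrite eq_sym (negbTE nyx) /=.
by case: ((x.1 == y.1) || (x.2 == y.2)).
Qed.

Lemma dv_le2 m n (x y : vtx m n) : dv x y <= 2.
Proof. by rewrite /dv; case: ifP => //; case: ifP. Qed.

Lemma dist_set2 m n (s x1 x2 : vtx m n) : 3 <= #|[set: vtx m n]| ->
  dist_set s [set x1; x2] = minn (dv s x1) (dv s x2).
Proof.
move=> h3; rewrite /dist_set.
apply/eqP; rewrite eqn_leq; apply/andP; split.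
  rewrite leq_min; apply/andP; split.
    rewrite (bigD1 x1) ?inE ?eqxx //= dist_dv //; exact: geq_minl.
  rewrite (bigD1 x2) ?inE ?eqxx ?orbT //= dist_dv //; exact: geq_minl.
apply: (big_ind (fun v => minn (dv s x1) (dv s x2) <= v)).
- have := dv_le2 s x1; have := geq_minl (dv s x1) (dv s x2); lia.
- by move=> a b ha hb; rewrite leq_min ha hb.
- move=> i; rewrite !inE dist_dv // => /orP[]/eqP->; [exact: geq_minl|exact: geq_minr].
Qed.
Section DD.
Variable T : eqType.
Fixpoint dd (seen s : seq T) : seq T :=
  if s is x :: s' then (if x \in seen then dd seen s' else x :: dd (x :: seen) s')
  else [::].

Lemma dd_mem seen s y : y \in dd seen s -> (y \in s) && (y \notin seen).
Proof.
elim: s seen => [|x s IH] seen //=.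
case: ifP => xs.
  by move/IH => /andP[h1 h2]; rewrite inE h1 h2 orbT.
rewrite inE => /orP[/eqP->|/IH]; first by rewrite inE eqxx xs.
by rewrite inE negb_or => /andP[h1 /andP[_ h2]]; rewrite inE h1 h2 orbT.
Qed.

Lemma dd_memC seen s y : y \in s -> y \notin seen -> y \in dd seen s.
Proof.
elim: s seen => [|x s IH] seen //=.
rewrite inE => /orP[/eqP->|ys] ys'.
  by rewrite (negbTE ys') inE eqxx.
case: ifP => xs; first exact: IH.
rewrite inE; case: (y =P x) => //= /eqP yx.
by apply: IH; rewrite // inE negb_or yx.
Qed.

Lemma dd_uniq seen s : uniq (dd seen s).
Proof.
elim: s seen => [|x s IH] seen //=.
case: ifP => xs //=; rewrite IH andbT.
by apply/negP => /dd_mem; rewrite inE eqxx andbF.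
Qed.

Lemma dd_size seen s : size (dd seen s) <= size s.
Proof.
elim: s seen => [|x s IH] seen //=.
by case: ifP => _ /=; [apply: leq_trans (IH _) _|rewrite ltnS].
Qed.

Lemma dd_index x0 seen s k : k < size s -> nth x0 s k \notin seen ->
  index (nth x0 s k) (dd seen s) <= k.
Proof.
elim: s seen k => [|x s IH] seen k //=.
case: k => [|k] /=; rewrite ?ltnS => hk hs.
  by rewrite (negbTE hs) /= eqxx.
case: ifP => xs.
  by apply: leq_trans (IH _ _ hk hs) _.
rewrite /=; case: eqP => // /eqP ne.
rewrite ltnS; apply: IH => //; rewrite inE negb_or hs andbT eq_sym.
exact: ne.
Qed.
End DD.

Lemma choose_map k (c1 c2 c3 c4 : 'I_k) : 6 <= k ->
  exists phi : nat -> 'I_k,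
  [/\ (forall i j, i < 6 -> j < 6 -> phi i = phi j -> i = j),
      phi 0 = c1, (exists2 i, i < 2 & phi i = c2),
      (exists2 i, i < 3 & phi i = c3)
    & (exists2 i, i < 4 & phi i = c4) /\
      (phi 4 \notin [:: c1; c2; c3; c4]) && (phi 5 \notin [:: c1; c2; c3; c4])].
Proof.
move=> hk.
set cs := [:: c1; c2; c3; c4].
set D := dd [::] cs.
set R := [seq c <- enum 'I_k | c \notin cs].
set L := D ++ R.
have hD : size D <= 4 by apply: (dd_size [::] cs).
have uL : uniq L.
  rewrite cat_uniq dd_uniq filter_uniq ?enum_uniq // andbT /=.
  apply/hasP => -[c]; rewrite mem_filter => /andP[/negP nc _] /dd_mem /andP[].
  by move=> /nc.
have sL : k <= size L.
  rewrite -{1}(size_enum_ord k); apply: uniq_leq_size; first exact: enum_uniq.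
  move=> c _; rewrite mem_cat; case hc: (c \in cs).
    by rewrite dd_memC.
  by rewrite mem_filter hc mem_enum orbT.
have hidx : forall j, j < 4 -> exists2 i, i <= j & nth c1 L i = nth c1 cs j.
  move=> j hj; set c := nth c1 cs j.
  have cD : c \in D by apply: dd_memC; [apply: mem_nth|].
  exists (index c L); first by rewrite /L index_cat cD; exact: dd_index.
  by rewrite nth_index // mem_cat cD.
have hpad : forall p, 4 <= p < 6 -> nth c1 L p \notin cs.
  move=> p /andP[h4 h6]; rewrite /L nth_cat ltnNge (leq_trans hD h4) /=.
  have : nth c1 R (p - size D) \in R.
    apply: mem_nth; move: sL; rewrite /L size_cat; lia.
  by rewrite mem_filter => /andP[].
exists (fun i => nth c1 L i); split.
- move=> i j hi hj /eqP; rewrite nth_uniq //; first by move/eqP.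
    by apply: leq_trans sL; apply: leq_trans hi _.
  by apply: leq_trans sL; apply: leq_trans hj _.
- by have [i] := hidx 0 isT; case: i.
- by have [i hi e] := hidx 1 isT; exists i.
- by have [i hi e] := hidx 2 isT; exists i.
- split; first by have [i hi e] := hidx 3 isT; exists i.
  by rewrite !hpad.
Qed.
Definition dn (p q : nat*nat) : nat :=
  if p == q then 0 else if (p.1 == q.1) || (p.2 == q.2) then 1 else 2.
Definition okp (x1 x2 y1 y2 p : nat*nat) : bool :=
  minn (dn p x1) (dn p x2) == minn (dn p y1) (dn p y2).
Definition I6 := iota 0 6.
Definition I4 := iota 0 4.
Definition good (x1 x2 y1 y2 : nat*nat) : bool :=
  all (fun j => has (fun i1 => has (fun i2 => (i1 != i2) && okp x1 x2 y1 y2 (i1,j) && okp x1 x2 y1 y2 (i2,j)) I6) I6) I6 &&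
  all (fun i => has (fun j1 => has (fun j2 => (j1 != j2) && okp x1 x2 y1 y2 (i,j1) && okp x1 x2 y1 y2 (i,j2)) I6) I6) I6 &&
  all (fun i1 => all (fun i2 => all (fun j1 => all (fun j2 =>
     (i1 != i2) && (j1 != j2) ==> [|| okp x1 x2 y1 y2 (i1,j1), okp x1 x2 y1 y2 (i1,j2), okp x1 x2 y1 y2 (i2,j1) | okp x1 x2 y1 y2 (i2,j2)]) I6) I6) I6) I6.
Definition sameset (x1 x2 y1 y2 : nat*nat) : bool :=
  [&& (x1 \in [:: y1; y2]), (x2 \in [:: y1; y2]), (y1 \in [:: x1; x2]) & (y2 \in [:: x1; x2])].
Definition checkall : bool :=
  all (fun a1 => all (fun b1 => all (fun a2 => all (fun b2 =>
  all (fun a3 => all (fun b3 => all (fun a4 => all (fun b4 =>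
    sameset (a1,b1) (a2,b2) (a3,b3) (a4,b4) || ~~ good (a1,b1) (a2,b2) (a3,b3) (a4,b4))
  (iota 0 4)) (iota 0 4)) (iota 0 3)) (iota 0 3)) (iota 0 2)) (iota 0 2)) (iota 0 1)) (iota 0 1).
Lemma checkall_ok : checkall. Proof. vm_compute. reflexivity. Qed.

Lemma check_spec a2 b2 a3 b3 a4 b4 : a2 < 2 -> b2 < 2 -> a3 < 3 -> b3 < 3 -> a4 < 4 -> b4 < 4 ->
  sameset (0,0) (a2,b2) (a3,b3) (a4,b4) || ~~ good (0,0) (a2,b2) (a3,b3) (a4,b4).
Proof.
move=> h2 h2' h3 h3' h4 h4'.
have m2 : a2 \in iota 0 2 by rewrite mem_iota.
have m2' : b2 \in iota 0 2 by rewrite mem_iota.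
have m3 : a3 \in iota 0 3 by rewrite mem_iota.
have m3' : b3 \in iota 0 3 by rewrite mem_iota.
have m4 : a4 \in iota 0 4 by rewrite mem_iota.
have m4' : b4 \in iota 0 4 by rewrite mem_iota.
have := checkall_ok; rewrite /checkall.
move=> /allP/(_ 0 isT)/allP/(_ 0 isT).
move=> /allP/(_ a2 m2)/allP/(_ b2 m2')/allP/(_ a3 m3)/allP/(_ b3 m3').
move=> /allP/(_ a4 m4)/allP/(_ b4 m4').
by [].
Qed.

Lemma pick2 k (phi : nat -> 'I_k) (cs : seq 'I_k) (P : pred 'I_k) c1 c2 :
  (forall c, c \in cs -> exists2 i, i < 4 & phi i = c) ->
  phi 4 \notin cs -> phi 5 \notin cs ->
  (forall c c', c \notin cs -> c' \notin cs -> P c = P c') ->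
  c1 != c2 -> P c1 -> P c2 ->
  exists i1 i2, [/\ i1 < 6, i2 < 6, i1 != i2, P (phi i1) & P (phi i2)].
Proof.
move=> hcs h4 h5 hP ne p1 p2.
case: (boolP (c1 \in cs)) => m1; case: (boolP (c2 \in cs)) => m2.
- have [i1 l1 e1] := hcs _ m1; have [i2 l2 e2] := hcs _ m2.
  exists i1, i2; rewrite e1 e2; split => //; try lia.
  by apply: contraNneq ne => e; rewrite -e1 -e2 e.
- have [i1 l1 e1] := hcs _ m1.
  exists i1, 4; rewrite e1 (hP (phi 4) c2) //; split => //; lia.
- have [i2 l2 e2] := hcs _ m2.
  exists 4, i2; rewrite e2 (hP (phi 4) c1) //; split => //; lia.
- by exists 4, 5; rewrite (hP (phi 4) c1) // (hP (phi 5) c2).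
Qed.

Lemma dv_col m n (c c' : 'I_m) (r : 'I_n) (x : vtx m n) :
  c != x.1 -> c' != x.1 -> dv (c, r) x = dv (c', r) x.
Proof.
by case: x => a b /= h h'; rewrite /dv !xpair_eqE /= (negbTE h) (negbTE h').
Qed.

Lemma dv_row m n (c : 'I_m) (r r' : 'I_n) (x : vtx m n) :
  r != x.2 -> r' != x.2 -> dv (c, r) x = dv (c, r') x.
Proof.
by case: x => a b /= h h'; rewrite /dv !xpair_eqE /= (negbTE h) (negbTE h') !andbF !orbF.
Qed.

Lemma set_le2 (T : finType) (X : {set T}) : X != set0 -> #|X| <= 2 ->
  exists x1 x2, X = [set x1; x2].
Proof.
move=> /set0Pn [x1 hx1] h2.
case: (boolP (X :\ x1 == set0)) => h.
  exists x1, x1; apply/setP => z; rewrite !inE orbb.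
  apply/idP/idP => [hz|/eqP -> //]; apply/negPn/negP => nz.
  by move/eqP/setP/(_ z): h; rewrite !inE nz hz.
move/set0Pn: h => [x2]; rewrite !inE => /andP[n21 hx2].
exists x1, x2; apply/eqP; rewrite eq_sym eqEcard cards2 eq_sym n21.
rewrite (leq_trans h2) // andbT; apply/subsetP => z; rewrite !inE.
by case/orP => /eqP ->.
Qed.

Theorem mainTheorem12 (m n : nat) (S : {set vtx m n}) :
  6 <= n -> n <= m ->
  (forall u : 'I_n, 2 <= #|row m u :&: S|) ->
  (forall a : 'I_m, 2 <= #|column n a :&: S|) ->
  (forall (a b : 'I_m) (u v : 'I_n), a != b -> u != v ->
     quadruple a b u v :&: S != set0) ->
  two_resolving S.
Proof.
move=> h6 hnm hrow hcol hquad X Y hX hY cX cY hXY.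
have h3 : 3 <= #|[set: vtx m n]|.
  rewrite cardsT card_prod !card_ord; by apply: leq_trans (leq_mul (leq_trans h6 hnm) h6).
case: (boolP [exists s in S, dist_set s X != dist_set s Y]) =>
  [/exists_inP [s sS ne]|hall]; first by exists s.
exfalso.
have [x1 [x2 eX]] := set_le2 hX cX.
have [y1 [y2 eY]] := set_le2 hY cY.
pose Ef := fun p : vtx m n => minn (dv p x1) (dv p x2) == minn (dv p y1) (dv p y2).
have ES : forall s, s \in S -> Ef s.
  move=> s sS; rewrite /Ef -(dist_set2 _ _ _ h3) -(dist_set2 _ _ _ h3) -eX -eY.
  by apply: contraNT hall => h; apply/exists_inP; exists s.
have [phi [phiI phi0 [a2 ha2 ea2] [a3 ha3 ea3] [[a4 ha4 ea4] hpad]]] :=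
  choose_map x1.1 x2.1 y1.1 y2.1 (leq_trans h6 hnm).
have [psi [psiI psi0 [b2 hb2 eb2] [b3 hb3 eb3] [[b4 hb4 eb4] hpad']]] :=
  choose_map x1.2 x2.2 y1.2 y2.2 h6.
have phiE : forall i a, i < 6 -> a < 6 -> (phi i == phi a) = (i == a).
  by move=> i a hi ha; apply/eqP/eqP => [/phiI|->]; [apply|].
have psiE : forall i a, i < 6 -> a < 6 -> (psi i == psi a) = (i == a).
  by move=> i a hi ha; apply/eqP/eqP => [/psiI|->]; [apply|].
have dvE : forall i j a b, i < 6 -> j < 6 -> a < 6 -> b < 6 ->
    dv (phi i, psi j) (phi a, psi b) = dn (i, j) (a, b).
  by move=> i j a b hi hj ha hb; rewrite /dv /dn !xpair_eqE /= phiE // psiE.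
have ex1 : x1 = (phi 0, psi 0) by rewrite phi0 psi0; case: (x1).
have ex2 : x2 = (phi a2, psi b2) by rewrite ea2 eb2; case: (x2).
have ey1 : y1 = (phi a3, psi b3) by rewrite ea3 eb3; case: (y1).
have ey2 : y2 = (phi a4, psi b4) by rewrite ea4 eb4; case: (y2).
have la2 : a2 < 6 := leq_trans ha2 (isT : 2 <= 6).
have la3 : a3 < 6 := leq_trans ha3 (isT : 3 <= 6).
have la4 : a4 < 6 := leq_trans ha4 (isT : 4 <= 6).
have lb2 : b2 < 6 := leq_trans hb2 (isT : 2 <= 6).
have lb3 : b3 < 6 := leq_trans hb3 (isT : 3 <= 6).
have lb4 : b4 < 6 := leq_trans hb4 (isT : 4 <= 6).
have okE : forall i j, i < 6 -> j < 6 ->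
    okp (0,0) (a2,b2) (a3,b3) (a4,b4) (i,j) = Ef (phi i, psi j).
  by move=> i j hi hj; rewrite /okp /Ef ex1 ex2 ey1 ey2 !dvE.
have PE : forall p q : nat * nat, p.1 < 6 -> p.2 < 6 -> q.1 < 6 -> q.2 < 6 ->
    ((phi p.1, psi p.2) == (phi q.1, psi q.2)) = (p == q).
  by case=> i j [a b] /= *; rewrite !xpair_eqE phiE // psiE.
have hsame : ~~ sameset (0,0) (a2,b2) (a3,b3) (a4,b4).
  apply/negP => hs; move/eqP: hXY; apply; rewrite eX eY.
  move: hs; rewrite /sameset !inE -!PE //=.
  rewrite -ex1 -ex2 -ey1 -ey2 => /and4P[s1 s2 s3 s4].
  apply/eqP; rewrite eqEsubset; apply/andP; split; apply/subsetP => z;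
    rewrite !inE => /orP[]/eqP ->; by rewrite ?s1 ?s2 ?s3 ?s4.
have := check_spec ha2 hb2 ha3 hb3 ha4 hb4.
rewrite (negbTE hsame) orFb => /negP; apply.
have hcs : forall c, c \in [:: x1.1; x2.1; y1.1; y2.1] -> exists2 i, i < 4 & phi i = c.
  move=> c; rewrite !inE => /or4P[]/eqP->.
  - by exists 0.
  - by exists a2 => //; apply: leq_trans ha2 _.
  - by exists a3 => //; apply: leq_trans ha3 _.
  - by exists a4.
have hrs : forall r, r \in [:: x1.2; x2.2; y1.2; y2.2] -> exists2 i, i < 4 & psi i = r.
  move=> c; rewrite !inE => /or4P[]/eqP->.
  - by exists 0.
  - by exists b2 => //; apply: leq_trans hb2 _.
  - by exists b3 => //; apply: leq_trans hb3 _.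
  - by exists b4.
move/andP: hpad => [hp4 hp5]; move/andP: hpad' => [hq4 hq5].
have hPc : forall r c c', c \notin [:: x1.1; x2.1; y1.1; y2.1] ->
    c' \notin [:: x1.1; x2.1; y1.1; y2.1] -> Ef (c, r) = Ef (c', r).
  move=> r c c'; rewrite !inE !negb_or => /and4P[n1 n2 n3 n4] /and4P[n1' n2' n3' n4'].
  by rewrite /Ef (@dv_col m n c c' r x1) // (@dv_col m n c c' r x2) //
    (@dv_col m n c c' r y1) // (@dv_col m n c c' r y2).
have hPr : forall c r r', r \notin [:: x1.2; x2.2; y1.2; y2.2] ->
    r' \notin [:: x1.2; x2.2; y1.2; y2.2] -> Ef (c, r) = Ef (c, r').
  move=> c r r'; rewrite !inE !negb_or => /and4P[n1 n2 n3 n4] /and4P[n1' n2' n3' n4'].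
  by rewrite /Ef (@dv_row m n c r r' x1) // (@dv_row m n c r r' x2) //
    (@dv_row m n c r r' y1) // (@dv_row m n c r r' y2).
rewrite /good; apply/andP; split; [apply/andP; split|].
- apply/allP => j; rewrite mem_iota add0n => /andP[_ hj].
  have /card_gt1P [[c1 r1] [[c2 r2] [h1 h2 ne]]] := hrow (psi j).
  rewrite !inE in h1 h2; case/andP: h1 => /eqP er1 s1; case/andP: h2 => /eqP er2 s2.
  rewrite /= in er1 er2; subst r1 r2; rewrite xpair_eqE eqxx andbT in ne.
  have [i1 [i2 [l1 l2 n12 P1 P2]]] := pick2 (P := fun c => Ef (c, psi j)) hcs hp4 hp5
    (hPc (psi j)) ne (ES _ s1) (ES _ s2).
  apply/hasP; exists i1; first by rewrite mem_iota.
  apply/hasP; exists i2; first by rewrite mem_iota.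
  by rewrite !okE // n12 P1 P2.
- apply/allP => i; rewrite mem_iota add0n => /andP[_ hi].
  have /card_gt1P [[c1 r1] [[c2 r2] [h1 h2 ne]]] := hcol (phi i).
  rewrite !inE in h1 h2; case/andP: h1 => /eqP er1 s1; case/andP: h2 => /eqP er2 s2.
  rewrite /= in er1 er2; subst c1 c2; rewrite xpair_eqE eqxx /= in ne.
  have [j1 [j2 [l1 l2 n12 P1 P2]]] := pick2 (P := fun r => Ef (phi i, r)) hrs hq4 hq5
    (hPr (phi i)) ne (ES _ s1) (ES _ s2).
  apply/hasP; exists j1; first by rewrite mem_iota.
  apply/hasP; exists j2; first by rewrite mem_iota.
  by rewrite !okE // n12 P1 P2.
- apply/allP => i1; rewrite mem_iota add0n => /andP[_ hi1].
  apply/allP => i2; rewrite mem_iota add0n => /andP[_ hi2].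
  apply/allP => j1; rewrite mem_iota add0n => /andP[_ hj1].
  apply/allP => j2; rewrite mem_iota add0n => /andP[_ hj2].
  apply/implyP => /andP[ni nj].
  have ne1 : phi i1 != phi i2 by rewrite phiE.
  have ne2 : psi j1 != psi j2 by rewrite psiE.
  have /set0Pn [s] := hquad (phi i1) (phi i2) (psi j1) (psi j2) ne1 ne2.
  rewrite inE => /andP[hq sS]; have Es := ES _ sS.
  move: hq; rewrite /quadruple !inE => /orP[/orP[/orP[|]|]|] /eqP es;
    rewrite es in Es; by rewrite !okE // Es ?orbT.
Qed.
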